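(* Let $\mathfrak{g}$ be a symmetric social storage network on $N$ agents with stability point $\hat\eta$, which has evolved from the null network. Suppose $\hat\eta$ is odd and $\mathfrak{g}$ has $\kappa\ge2$ connected components. Suppose at least two of the components each have either at most $\hat\eta$ agents, or an odd number of agents greater than $\hat\eta$. Then $\mathfrak{g}$ is not bilaterally stable.
   Context: A network is a simple undirected graph on a finite set $\mathbf{A}$ of $N$ agents, and $\eta_i(\mathfrak{g})$ is the degree (neighbourhood size) of $i$. Parameters are: disk failure rate $\lambda\in(0,1)$, per-link cost $c$, data worths $\beta_i>0$, storage $s_i$, data size $d_i$ and budget $b_i$. Remaining storage is $RS_i=s_i-\sum_{j\text{ neighbour of }i}d_j$ and remaining budget is $RB_i=b_i-c\,\eta_i(\mathfrak{g})$. A symmetric social storage network is one of the following four types. (a) SVN with sufficient storage under the Multi-Objective Framework (MO): - $\beta_i=\beta$, with $\beta,\lambda,c\in(0,1)$; - $s_i\ge\sum_{j\ne i}d_j$; - $u_i=\beta(1-\lambda^{\eta_i})-c\eta_i$; - it is assumed that $c<\beta(1-\lambda)$ and $L=|\ln(c/(\beta(1-\lambda)))|/|\ln\lambda|$ is not an integer; the stability point is $\hat\eta=\lceil L\rceil$. (b) SV-SRN under MO: - as in (a) but with $s_i=s$ and $d_i=d$ (with $s/d$ an integer) instead of sufficient storage; - the stability point is $\hat\eta=\min\{\lceil L\rceil,s/d\}$. (c) SVN with sufficient storage and budget under the Single-Objective Framework (SO): - $\beta_i=\beta$; - $s_i\ge\sum_{j\ne i}d_j$ and $b_i\ge c(N-1)$;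 - $u_i=\beta(1-\lambda^{\eta_i})$; - the stability point is $\hat\eta=N-1$. (d) SRN under SO: - $s_i=s$, $d_i=d$, $b_i=b$ (with $s/d$ and $b/c$ integers); - $u_i=\beta_i(1-\lambda^{\eta_i})$; - the stability point is $\hat\eta=\min\{s/d,b/c\}$. Agent $i$ is willing to add the link $\langle ij\rangle$ if $u_i(\mathfrak{g}+\langle ij\rangle)>u_i(\mathfrak{g})$, together with $RS_j\ge d_i$ in types (b) and (d), and additionally $RB_i\ge c$ in type (d). Bilateral stability means both of the following hold. 1. For every link $\langle ij\rangle$: if $u_i(\mathfrak{g}-\langle ij\rangle)>u_i(\mathfrak{g})$, then $u_j(\mathfrak{g}-\langle ij\rangle)<u_j(\mathfrak{g})$. 2. For every non-link $\langle ij\rangle$: if $i$ is willing to add $\langle ij\rangle$, then $j$ is not willing to add $\langle ij\rangle$. $\mathfrak{g}$ has evolved from the null network if it is obtained from the network with no links by a finite sequence of single link additions $\langle ij\rangle$, each performed only when both $i$ and $j$ are willing to add it at that moment. *)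

(* Defs.v *)
From HB Require Import structures.
From mathcomp Require Import all_boot all_order all_algebra.
From mathcomp Require Import reals exp.
Set Implicit Arguments. Unset Strict Implicit. Unset Printing Implicit Defensive.
Import Order.TTheory GRing.Theory Num.Theory.
Local Open Scope ring_scope.

Section SocialStorage.
Variables (R : realType) (N : nat).

(* A network: a set of undirected links, each link being a 2-element set. *)
Definition network := {set {set 'I_N}}.

Definition adj (g : network) : rel 'I_N := fun i j => [set i; j] \in g.
Definition add_link (g : network) (i j : 'I_N) : network := g :|: [set [set i; j]].
Definition del_link (g : network) (i j : 'I_N) : network := g :\ [set i; j].
Definition null_network : network := set0.

Definition degree (g : network) (i : 'I_N) : nat := #|[set j | adj g i j]|.

Definition components (g : network) : {set {set 'I_N}} :=
  [set [set j | connect (adj g) i j] | i : 'I_N].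

Record params := Params {
  lam : R;                 (* disk failure rate lambda *)
  cost : R;                (* per-link cost c *)
  beta : 'I_N -> R;        (* data worths beta_i *)
  stor : 'I_N -> R;
  dsize : 'I_N -> R;
  budget : 'I_N -> R
}.

Inductive ssn_type := SVN_MO | SVSRN_MO | SVN_SO | SRN_SO.

Variable p : params.

Definition RS (g : network) (i : 'I_N) : R :=
  stor p i - \sum_(j | adj g i j) dsize p j.
Definition RB (g : network) (i : 'I_N) : R :=
  budget p i - cost p * (degree g i)%:R.

Definition Lval (b : R) : R :=
  `|ln (cost p / (b * (1 - lam p)))| / `|ln (lam p)|.
Definition ceil_nat (x : R) : nat := `|Num.ceil x|%N.

Definition symmetric_SSN (ty : ssn_type) (eta_hat : nat) : Prop :=
  [/\ 0 < lam p < 1, (forall i, 0 < beta p i) &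
  match ty with
  | SVN_MO => exists b : R,
      [/\ (forall i, beta p i = b), 0 < b < 1, 0 < cost p < 1 &
          (forall i, \sum_(j | j != i) dsize p j <= stor p i)] /\
      [/\ cost p < b * (1 - lam p),
          (forall z : int, Lval b != z%:~R) &
          eta_hat = ceil_nat (Lval b)]
  | SVSRN_MO => exists (b s d : R) (k : nat),
      [/\ (forall i, beta p i = b), 0 < b < 1, 0 < cost p < 1,
          (forall i, stor p i = s /\ dsize p i = d) &
          (0 < d /\ s / d = k%:R)] /\
      [/\ cost p < b * (1 - lam p),
          (forall z : int, Lval b != z%:~R) &
          eta_hat = minn (ceil_nat (Lval b)) k]
  | SVN_SO => exists b : R,
      [/\ (forall i, beta p i = b),
          (forall i, \sum_(j | j != i) dsize p j <= stor p i),
          (forall i, cost p * (N - 1)%:R <= budget p i) &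
          eta_hat = (N - 1)%N]
  | SRN_SO => exists (s d b : R) (k1 k2 : nat),
      [/\ (forall i, [/\ stor p i = s, dsize p i = d & budget p i = b]),
          0 < d /\ 0 < cost p, s / d = k1%:R, b / cost p = k2%:R &
          eta_hat = minn k1 k2]
  end].

Definition is_MO (ty : ssn_type) : bool :=
  match ty with SVN_MO | SVSRN_MO => true | _ => false end.

Definition util (ty : ssn_type) (g : network) (i : 'I_N) : R :=
  let e := degree g i in
  if is_MO ty then beta p i * (1 - lam p ^+ e) - cost p * e%:R
  else beta p i * (1 - lam p ^+ e).

Definition willing (ty : ssn_type) (g : network) (i j : 'I_N) : Prop :=
  [/\ util ty g i < util ty (add_link g i j) i,
      (ty = SVSRN_MO \/ ty = SRN_SO -> dsize p i <= RS g j) &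
      (ty = SRN_SO -> cost p <= RB g i)].

Definition bilaterally_stable (ty : ssn_type) (g : network) : Prop :=
  (forall i j, adj g i j ->
     util ty g i < util ty (del_link g i j) i ->
     util ty (del_link g i j) j < util ty g j) /\
  (forall i j, i != j -> ~~ adj g i j ->
     willing ty g i j -> ~ willing ty g j i).

Inductive evolved (ty : ssn_type) : network -> Prop :=
| evolved_null : evolved ty null_network
| evolved_step g i j : evolved ty g -> i != j -> ~~ adj g i j ->
    willing ty g i j -> willing ty g j i -> evolved ty (add_link g i j).

End SocialStorage.

(* Main.v *)
Require Import Defs.
From HB Require Import structures.
From mathcomp Require Import all_boot all_order all_algebra.
From mathcomp Require Import reals exp.
From mathcomp Require Import ring lra.
Import Order.TTheory GRing.Theory Num.Theory.
Local Open Scope ring_scope.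
Set Implicit Arguments. Unset Strict Implicit.

Section G.
Variable N : nat.
Implicit Types (g : network N) (i j k : 'I_N).

Lemma adj_sym g : symmetric (adj g).
Proof. by move=> i j; rewrite /adj setUC. Qed.

Lemma set2_eq1 i j k : i != j -> ([set i; k] == [set i; j]) = (k == j).
Proof.
move=> ij; apply/eqP/eqP => [E|->//].
have: k \in [set i; j] by rewrite -E !inE eqxx orbT.
rewrite !inE => /orP [/eqP ki|/eqP//].
have: j \in [set i; k] by rewrite E !inE eqxx orbT.
by rewrite !inE ki orbb => /eqP ji; move: ij; rewrite ji eqxx.
Qed.

Lemma adj_add g i j k l : adj (add_link g i j) k l = adj g k l || ([set k; l] == [set i; j]).
Proof. by rewrite /adj /add_link !inE. Qed.

Lemma deg_add_l g i j : i != j -> ~~ adj g i j ->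
  degree (add_link g i j) i = (degree g i).+1.
Proof.
move=> ij nij; rewrite /degree.
have -> : [set l | adj (add_link g i j) i l] = j |: [set l | adj g i l].
  by apply/setP => l; rewrite !inE adj_add set2_eq1 // orbC.
by rewrite cardsU1 inE (negbTE nij).
Qed.

Lemma add_linkC g i j : add_link g i j = add_link g j i.
Proof. by rewrite /add_link (setUC [set i] [set j]). Qed.

Lemma deg_add_r g i j : i != j -> ~~ adj g i j ->
  degree (add_link g i j) j = (degree g j).+1.
Proof.
by move=> ij nij; rewrite add_linkC deg_add_l // ?(eq_sym j) // adj_sym.
Qed.

Lemma deg_add_o g i j k : k != i -> k != j ->
  degree (add_link g i j) k = degree g k.
Proof.
move=> ki kj; rewrite /degree; apply: eq_card => l.
rewrite !inE adj_add; case: eqP => [E|]; last by rewrite orbF.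
have: k \in [set i; j] by rewrite -E !inE eqxx.
by rewrite !inE (negbTE ki) (negbTE kj).
Qed.

Lemma irr_add g i j : i != j -> (forall k, ~~ adj g k k) -> forall k, ~~ adj (add_link g i j) k k.
Proof.
move=> ij H k; rewrite adj_add (negbTE (H k)) /=; apply/eqP => E.
have: i \in [set k; k] by rewrite E !inE eqxx.
have: j \in [set k; k] by rewrite E !inE eqxx orbT.
by rewrite !inE !orbb => /eqP jk /eqP ik; move: ij; rewrite jk ik eqxx.
Qed.


Lemma csym g : connect_sym (adj g).
Proof. exact: sym_connect_sym (adj_sym g). Qed.

Lemma comp_rep g C x : C \in components g -> x \in C ->
  C = [set y | connect (adj g) x y].
Proof.
case/imsetP => i0 _ -> ; rewrite inE => h0x.
apply/setP => y; rewrite !inE; apply/idP/idP => H.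
  by apply: connect_trans _ H; rewrite csym.
exact: connect_trans h0x H.
Qed.

Lemma comp_mem g C x : C \in components g -> x \in C -> x \in C.
Proof. by []. Qed.

Lemma comp_adj g C x y : C \in components g -> x \in C -> adj g x y -> y \in C.
Proof.
move=> HC Hx Hxy; rewrite (comp_rep HC Hx) inE; exact: connect1.
Qed.

Lemma comp_neq g C1 C2 x y : C1 \in components g -> C2 \in components g ->
  C1 != C2 -> x \in C1 -> y \in C2 -> (x != y) && ~~ adj g x y.
Proof.
move=> H1 H2 ne Hx Hy.
have E1 := comp_rep H1 Hx; have E2 := comp_rep H2 Hy.
apply/andP; split.
  by apply/eqP => xy; move: ne; rewrite E1 E2 xy eqxx.
apply/negP => a; move: ne; rewrite E1 E2.
suff -> : [set z | connect (adj g) x z] = [set z | connect (adj g) y z] by rewrite eqxx.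
apply/setP => z; rewrite !inE; apply/idP/idP => H.
  by apply: connect_trans H; rewrite csym; apply: connect1.
by apply: connect_trans H; apply: connect1.
Qed.

Lemma comp_nonempty g C : C \in components g -> exists x, x \in C.
Proof. by case/imsetP => i0 _ ->; exists i0; rewrite inE connect0. Qed.

Lemma deg_lt_comp g C i : (forall k, ~~ adj g k k) -> C \in components g -> i \in C ->
  (degree g i < #|C|)%N.
Proof.
move=> irr HC Hi; rewrite (cardsD1 i C) Hi add1n ltnS /degree.
apply: subset_leq_card; apply/subsetP => j; rewrite !inE => a.
rewrite (comp_adj HC Hi a) andbT; apply/eqP => ji; move: a; rewrite ji.
by move/negP: (irr i).
Qed.

Lemma deg_sum g C i : C \in components g -> i \in C ->
  degree g i = (\sum_(j in C) (adj g i j : nat))%N.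
Proof.
move=> HC Hi; rewrite /degree -sum1_card big_mkcond [RHS]big_mkcond /=.
apply: eq_bigr => j _; rewrite inE.
by case a: (adj g i j); rewrite ?(comp_adj HC Hi a) //; case: (j \in C).
Qed.

Lemma sym_even (r : rel 'I_N) (C : {set 'I_N}) : symmetric r -> (forall k, ~~ r k k) ->
  ~~ odd (\sum_(i in C) \sum_(j in C) (r i j : nat)).
Proof.
move=> sym irr.
have E : forall i j, (r i j : nat) = ((r i j && (i < j)%N) + (r j i && (j < i)%N))%N.
  move=> i j; rewrite (sym j i); case: (ltngtP i j) => h; rewrite ?andbF ?andbT ?addn0 //.
  by have /val_inj -> := h; rewrite (negbTE (irr j)).
under eq_bigr => i _ do under eq_bigr => j _ do rewrite E.
under eq_bigr => i _ do rewrite big_split /=.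
rewrite big_split /= [X in (_ + X)%N]exchange_big /=.
by rewrite addnn odd_double.
Qed.


Lemma exists_low g C eh : (forall k, ~~ adj g k k) -> (forall k, (degree g k <= eh)%N) ->
  odd eh -> C \in components g ->
  (#|C| <= eh)%N || (odd #|C| && (eh < #|C|)%N) ->
  exists2 i, i \in C & (degree g i < eh)%N.
Proof.
move=> irr le oe HC /orP [cle | /andP [oc _]].
  have [x Hx] := comp_nonempty HC; exists x => //.
  exact: leq_trans (deg_lt_comp irr HC Hx) cle.
case: (pickP [pred i | (i \in C) && (degree g i < eh)%N]) => [x /andP [Hx Hd]|H].
  by exists x.
have := sym_even C (adj_sym g) irr.
have -> : (\sum_(i in C) \sum_(j in C) (adj g i j : nat))%N = (\sum_(i in C) eh)%N.
  apply: eq_bigr => i Hi; rewrite -deg_sum //.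
  have := H i; rewrite /= Hi /= => /negbT; rewrite -leqNgt => h.
  by apply/eqP; rewrite eqn_leq le h.
by rewrite sum_nat_const oddM oc oe.
Qed.

End G.

Section H.
Variables (R : realType) (N : nat) (p : params R N).
Implicit Types (g : network N) (i j k : 'I_N).

Lemma ceil_nat_lt (L : R) (e : nat) : 0 <= L ->
  (e%:R < L) = (e < ceil_nat L)%N.
Proof.
move=> L0; rewrite /ceil_nat.
have c0 : 0 <= Num.ceil L by rewrite ceil_ge0; lra.
rewrite -ltz_nat gez0_abs // ltNge [in RHS]ltNge ceil_le_int.
by rewrite -ltNge -[e%:R]/(e%:Z%:~R).
Qed.

Lemma MO_gain (b : R) (e : nat) : 0 < b -> 0 < lam p < 1 -> 0 < cost p ->
  cost p < b * (1 - lam p) ->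
  (b * (1 - lam p ^+ e) - cost p * e%:R < b * (1 - lam p ^+ e.+1) - cost p * e.+1%:R)
  = (e < ceil_nat (Lval p b))%N.
Proof.
move=> b0 /andP [l0 l1] c0 cb.
move: b0 l0 l1 c0 cb; set l := lam p; set c := cost p => b0 l0 l1 c0 cb.
have bl : 0 < b * (1 - l) by apply: mulr_gt0 => //; lra.
have x0 : 0 < c / (b * (1 - l)) by apply: divr_gt0.
have x1 : c / (b * (1 - l)) < 1 by rewrite ltr_pdivrMr // mul1r.
have le0 : 0 < l ^+ e by apply: exprn_gt0.
have -> : (b * (1 - l ^+ e) - c * e%:R < b * (1 - l ^+ e.+1) - c * e.+1%:R)
   = (c / (b * (1 - l)) < l ^+ e).
  rewrite ltr_pdivrMr //.
  have E : (b * (1 - l ^+ e.+1) - c * e.+1%:R) - (b * (1 - l ^+ e) - c * e%:R)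
     = l ^+ e * (b * (1 - l)) - c by rewrite exprS -natr1; ring.
  apply/idP/idP => H; lra.
rewrite -ltr_ln ?posrE // lnXn // -ceil_nat_lt; last first.
  by rewrite /Lval divr_ge0.
rewrite /Lval (ler0_norm (ltW (ln_lt0 _))); last by rewrite x0 x1.
rewrite (ler0_norm (ltW (ln_lt0 _))); last by rewrite l0 l1.
have lnl : ln l < 0 by apply: ln_lt0; rewrite l0 l1.
rewrite ltr_pdivlMr; last by rewrite oppr_gt0.
rewrite -mulr_natl; apply/idP/idP => H; nra.
Qed.


Lemma cap (x y : R) (k n : nat) : 0 < x -> y / x = k%:R ->
  (x <= y - x * n%:R) = (n < k)%N.
Proof.
move=> x0 yk.
have -> : y = k%:R * x by rewrite -yk divfK // gt_eqF.
rewrite lerBrDr.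
have -> : x + x * n%:R = n.+1%:R * x by rewrite -natr1; ring.
by rewrite ler_pM2r // ler_nat.
Qed.

Lemma RS_const g j (s d : R) : (forall k, stor p k = s /\ dsize p k = d) ->
  RS p g j = s - d * (degree g j)%:R.
Proof.
move=> H; rewrite /RS (H j).1; congr (_ - _).
under eq_bigr => k _ do rewrite (H k).2.
rewrite sumr_const mulr_natr /degree; congr (_ *+ _).
by apply: eq_card => k; rewrite inE.
Qed.

Lemma SO_gain ty g i j : is_MO ty = false -> i != j -> ~~ adj g i j ->
  0 < lam p < 1 -> 0 < beta p i -> util p ty g i < util p ty (add_link g i j) i.
Proof.
move=> hty ij nij /andP [l0 l1] b0; rewrite /util hty deg_add_l //.
rewrite ltr_pM2l // ltrD2l ltrN2 exprS gtr_pMl //.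
exact: exprn_gt0.
Qed.


Lemma deg_leN g k : ~~ adj g k k -> (degree g k <= N - 1)%N.
Proof.
move=> irr; have := cardsC1 k; rewrite card_ord => E; rewrite subn1 -E /degree.
apply: subset_leq_card; apply/subsetP => l; rewrite !inE => a.
by apply/eqP => lk; move: a; rewrite lk; move/negP: irr.
Qed.

Lemma willing_low ty eh g i j : symmetric_SSN p ty eh -> i != j -> ~~ adj g i j ->
  (degree g i < eh)%N -> (degree g j < eh)%N -> willing p ty g i j.
Proof.
move=> [hl hbeta H] ij nij di dj; move: H.
have ul : forall b, (forall k, beta p k = b) -> 0 < b -> 0 < cost p -> cost p < b * (1 - lam p) ->
  (degree g i < ceil_nat (Lval p b))%N -> util p ty g i < util p ty (add_link g i j) i \/ is_MO ty = false.
  move=> b hb b0 c0 cb dl; case hty: (is_MO ty); last by right.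
  by left; rewrite /util hty deg_add_l // hb MO_gain.
case: ty ul => ul.
- move=> [b [[hb hb01 /andP [c0 c1] hs] [cb _ E]]]; subst eh.
  have b0 : 0 < b by case/andP: hb01.
  by split; [case: (ul b hb b0 c0 cb di) | case => // | by []].
- move=> [b [s [d [k [[hb hb01 /andP [c0 c1] hsd [d0 sdk]] [cb _ E]]]]]]; subst eh.
  have b0 : 0 < b by case/andP: hb01.
  split; first by case: (ul b hb b0 c0 cb (leq_trans di (geq_minl _ _))).
    move=> _; rewrite (RS_const _ _ hsd) (hsd i).2 (cap _ d0 sdk).
    exact: leq_trans dj (geq_minr _ _).
  by [].
- move=> [b [hb _ _ E]]; split => //; first by apply: SO_gain.
  by case.
- move=> [s [d [b [k1 [k2 [hsdb [d0 c0] sd bc E]]]]]]; subst eh.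
  have hsd : forall k, stor p k = s /\ dsize p k = d by move=> k; case: (hsdb k).
  split; first by apply: SO_gain.
    move=> _; rewrite (RS_const _ _ hsd) (hsd i).2 (cap _ d0 sd).
    exact: leq_trans dj (geq_minl _ _).
  move=> _; rewrite /RB; case: (hsdb i) => _ _ ->; rewrite (cap _ c0 bc).
  exact: leq_trans di (geq_minr _ _).
Qed.


Lemma willing_bound ty eh g i j : symmetric_SSN p ty eh -> i != j -> ~~ adj g i j ->
  ~~ adj (add_link g i j) i i -> willing p ty g i j -> willing p ty g j i ->
  (degree (add_link g i j) i <= eh)%N.
Proof.
move=> [hl hbeta H] ij nij irr [u1 s1 b1] [u2 s2 b2]; move: H u1 s1 b1 u2 s2 b2.
case: ty.
- move=> [b [[hb hb01 /andP [c0 c1] hs] [cb _ E]]]; subst eh.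
  have b0 : 0 < b by case/andP: hb01.
  move=> u1 _ _ _ _ _; move: u1.
  by rewrite /util /= deg_add_l // hb MO_gain.
- move=> [b [s [d [k [[hb hb01 /andP [c0 c1] hsd [d0 sdk]] [cb _ E]]]]]]; subst eh.
  have b0 : 0 < b by case/andP: hb01.
  move=> u1 _ _ _ s2 _; move: u1.
  rewrite /util /= deg_add_l // hb MO_gain // => u.
  move: (s2 (or_introl erefl)); rewrite (RS_const _ _ hsd) (hsd j).2 (cap _ d0 sdk).
  by move=> h; rewrite leq_min u h.
- by move=> [b [hb _ _ E]]; subst eh => *; apply: deg_leN.
- move=> [s [d [b [k1 [k2 [hsdb [d0 c0] sd bc E]]]]]]; subst eh.
  have hsd : forall k, stor p k = s /\ dsize p k = d by move=> k; case: (hsdb k).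
  move=> _ _ b1 _ s2 _; rewrite deg_add_l // leq_min.
  move: (s2 (or_intror erefl)); rewrite (RS_const _ _ hsd) (hsd j).2 (cap _ d0 sd) => ->.
  by move: (b1 erefl); rewrite /RB; case: (hsdb i) => _ _ ->; rewrite (cap _ c0 bc).
Qed.


Lemma evolved_inv ty eh g : symmetric_SSN p ty eh -> evolved p ty g ->
  (forall k, ~~ adj g k k) /\ (forall k, (degree g k <= eh)%N).
Proof.
move=> HS; elim => [|g' i j _ [irr le] ij nij wij wji].
  split=> k; first by rewrite /adj /null_network inE.
  suff -> : degree (@null_network N) k = 0%N by [].
  by apply/eqP; rewrite cards_eq0; apply/eqP/setP => l; rewrite !inE /adj inE.
have irr' := irr_add ij irr; split => // k.
case: (eqVneq k i) => [->|ki]; first exact: (willing_bound HS ij nij (irr' i) wij wji).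
case: (eqVneq k j) => [->|kj]; last by rewrite deg_add_o.
rewrite add_linkC; apply: (willing_bound HS) => //; first by rewrite eq_sym.
  by rewrite adj_sym.
by rewrite -add_linkC.
Qed.

End H.

Unset Implicit Arguments. Set Strict Implicit.

Theorem proposition3 (R : realType) (N : nat) (ty : ssn_type)
    (p : params R N) (eta_hat : nat) (g : network N) :
  symmetric_SSN p ty eta_hat ->
  evolved p ty g ->
  odd eta_hat ->
  (2 <= #|components g|)%N ->
  (exists C1 C2, [/\ C1 \in components g, C2 \in components g, C1 != C2,
      (#|C1| <= eta_hat)%N || (odd #|C1| && (eta_hat < #|C1|)%N) &
      (#|C2| <= eta_hat)%N || (odd #|C2| && (eta_hat < #|C2|)%N)]) ->
  ~ bilaterally_stable p ty g.
Proof.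
move=> HS Hev oe _ [C1 [C2 [H1 H2 ne c1 c2]]] [_ st].
have [irr le] := evolved_inv HS Hev.
have [i Hi di] := exists_low irr le oe H1 c1.
have [j Hj dj] := exists_low irr le oe H2 c2.
have /andP [ij nij] := comp_neq H1 H2 ne Hi Hj.
apply: (st i j ij nij); first exact: (willing_low HS).
apply: (willing_low HS) => //; first by rewrite eq_sym.
by rewrite adj_sym.
Qed.
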